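(* Let $d,\ell\ge1$, let $a\in\mathbb{R}^d$, and let $\mathbf{A}=\mathbf{S}+ae_d^T\in\mathbb{R}^{d\times d}$ be the companion matrix with last column $a$. Let $\mathbf{B}\in\mathbb{R}^{d}$ (a column), $\mathbf{C}\in\mathbb{R}^{1\times d}$, and $\tilde{\mathbf{C}}=\mathbf{C}(\mathbf{I}-\mathbf{A}^\ell)\in\mathbb{R}^{d}$. Let $\omega=\exp(-2\pi i/\ell)$ and assume $\mathbf{I}-\omega^m\mathbf{A}$ is invertible for every $m=0,\dots,\ell-1$. Consider the following algorithm (Algorithm 1). 1. For $u,v\in\mathbb{R}^d$ define $\mathrm{quad}(u,v)\in\mathbb{C}^\ell$ by: form $q\in\mathbb{R}^d$ with $q_k=\sum_{j=1}^{d-k}u_{j+k}v_j$ for $k=0,\dots,d-1$; zero-pad $q$ to length $\ell\lceil d/\ell\rceil$; split it into $\lceil d/\ell\rceil$ consecutive chunks $q^{(1)},\dots,q^{(\lceil d/\ell\rceil)}$ of length $\ell$; return the length-$\ell$ discrete Fourier transform $\mathcal{F}_\ell(q^{(1)}+\dots+q^{(\lceil d/\ell\rceil)})$, where $\mathcal{F}_\ell(w)[m]=\sum_{k=0}^{\ell-1}w_k\omega^{mk}$. 2. Compute $z=(\bar\omega^0,\bar\omega^1,\dots,\bar\omega^{\ell-1})$. 3. Compute, entrywise for $m=0,\dots,\ell-1$, $$\tilde{\mathbf{F}}^y=\mathrm{quad}(\tilde{\mathbf{C}},\mathbf{B})+\frac{\mathrm{quad}(\tilde{\mathbf{C}},a)\cdot\mathrm{quad}(e_d,\mathbf{B})}{z-\mathrm{quad}(e_d,a)}\in\mathbb{C}^\ell.$$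 4. Return $\mathbf{F}^y=\mathcal{F}_\ell^{-1}(\tilde{\mathbf{F}}^y)$. Then Algorithm 1 returns the output filter $\mathbf{F}^y=(\mathbf{C}\mathbf{B},\mathbf{C}\mathbf{A}\mathbf{B},\mathbf{C}\mathbf{A}^2\mathbf{B},\dots,\mathbf{C}\mathbf{A}^{\ell-1}\mathbf{B})$.
   Context: $\mathbf{S}$ denotes the $d\times d$ down-shift matrix (ones on the first subdiagonal, zeros elsewhere), $e_d=(0,\dots,0,1)^T$ is the $d$-th standard basis vector, and $\mathbf{I}$ is the identity. $\mathcal{F}_\ell^{-1}$ is the inverse of the length-$\ell$ DFT $\mathcal{F}_\ell$. The division and product in step 3 are entrywise. *)

(* Defs.v *)
From HB Require Import structures.
From mathcomp Require Import all_boot all_order all_algebra.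
From mathcomp Require Import all_classical all_reals all_analysis.
From mathcomp Require Import complex.
Unset Printing Implicit Defensive.
Import Order.TTheory GRing.Theory Num.Theory.
Local Open Scope ring_scope.

Section Defs.
Variable R : realType.
Local Notation C := R[i].

Definition rc (x : R) : C := Complex x 0.

(* omega = exp(-2 pi i / l) = cos(2 pi / l) - i sin(2 pi / l) *)
Definition omega (l : nat) : C :=
  Complex (cos (2 * pi / l%:R)) (- sin (2 * pi / l%:R)).

Definition shiftS (d : nat) : 'M[R]_d := \matrix_(i, j) ((i == j.+1 :> nat)%:R).

Definition e_last (d : nat) : 'cV[R]_d := \col_(i < d) ((i == d.-1 :> nat)%:R).

Definition companion (d : nat) (a : 'cV[R]_d) : 'M[R]_d :=
  shiftS d + a *m (e_last d)^T.

(* q_k = sum_{j=1}^{d-k} u_{j+k} v_j (1-indexed); 0-indexed: pairs (i, j) of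
   indices in {0..d-1} with i = j + k *)
Definition quad_q (d : nat) (u v : 'cV[R]_d) (k : nat) : R :=
  \sum_(j < d) \sum_(i < d | (nat_of_ord i == (j + k)%N)) u i 0 * v j 0.

(* ceil(d / l) *)
Definition nchunks (d l : nat) : nat := ((d + l).-1 %/ l)%N.

Definition quad_qpad (d : nat) (u v : 'cV[R]_d) (n : nat) : R :=
  if (n < d)%N then quad_q d u v n else 0.

Definition quad_w (d l : nat) (u v : 'cV[R]_d) (r : 'I_l) : R :=
  \sum_(c < nchunks d l) quad_qpad d u v (c * l + r)%N.

Definition dft (l : nat) (w : 'I_l -> C) (m : 'I_l) : C :=
  \sum_(k < l) w k * omega l ^+ (m * k)%N.

Definition idft (l : nat) (x : 'I_l -> C) (k : 'I_l) : C :=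
  (l%:R)^-1 * \sum_(m < l) x m * (omega l ^+ (m * k)%N)^-1.

Definition quad (d l : nat) (u v : 'cV[R]_d) : 'I_l -> C :=
  dft l (fun r => rc (quad_w d l u v r)).

Definition algorithm1 (d l : nat) (a B : 'cV[R]_d) (Cm : 'rV[R]_d) : 'I_l -> C :=
  let A := companion d a in
  let Ct : 'cV[R]_d := (Cm *m (1%:M - A ^+ l))^T in
  let z : 'I_l -> C := fun m => conjc (omega l) ^+ m in
  let Fty : 'I_l -> C := fun m =>
    quad d l Ct B m + quad d l Ct a m * quad d l (e_last d) B m
                    / (z m - quad d l (e_last d) a m) in
  idft l Fty.

End Defs.

(* Main.v *)
Require Import Defs.
From HB Require Import structures.
From mathcomp Require Import all_boot all_order all_algebra.
From mathcomp Require Import all_classical all_reals all_analysis.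
From mathcomp Require Import complex.
From mathcomp Require Import ring lra zify.
Import Order.TTheory GRing.Theory Num.Theory.
Local Open Scope ring_scope.

Section Trig.
Variable R : realType.
Local Notation C := R[i].

Lemma mulcE (a b c d : R) : (Complex a b) * (Complex c d) = Complex (a*c - b*d) (a*d + b*c) :> C.
Proof. by []. Qed.

Lemma cisX (t : R) (n : nat) : (Complex (cos t) (- sin t)) ^+ n =
  Complex (cos (n%:R * t)) (- sin (n%:R * t)) :> C.
Proof.
elim: n => [|n IH]; first by rewrite expr0 !mul0r cos0 sin0 oppr0.
rewrite exprSr IH -(natr1 n) mulrDl mul1r cosD sinD mulcE.
congr Complex; ring.
Qed.

Variable l : nat.
Hypothesis hl : (1 <= l)%N.

Lemma ln0 : l%:R != 0 :> R.
Proof. by rewrite pnatr_eq0 -lt0n. Qed.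

Lemma omegaX n : omega R l ^+ n =
  Complex (cos (n%:R * (2 * pi / l%:R))) (- sin (n%:R * (2 * pi / l%:R))).
Proof. exact: cisX. Qed.

Lemma omega_l : omega R l ^+ l = 1.
Proof.
rewrite omegaX mulrC divfK ?ln0 // mulr_natl cos2pi sin2pi oppr0.
by [].
Qed.

Lemma omega_neq1 j : (0 < j < l)%N -> omega R l ^+ j != 1.
Proof.
move=> /andP[j0 jl]; rewrite omegaX.
pose y : R := pi * (j%:R / l%:R).
have -> : j%:R * (2 * pi / l%:R) = y + y.
  by rewrite /y; field; rewrite ln0.
rewrite cosD; apply/negP => /eqP [] => h _.
have lp : 0 < l%:R :> R by rewrite ltr0n.
have jp : 0 < j%:R :> R by rewrite ltr0n.
have y0 : 0 < y by rewrite /y mulr_gt0 ?pi_gt0 ?divr_gt0.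
have y1 : y < pi.
  rewrite /y -[X in _ < X]mulr1 ltr_pM2l ?pi_gt0 // ltr_pdivrMr // mul1r.
  by rewrite ltr_nat.
have := @sin_gt0_pi R y; rewrite y0 y1 => /(_ isT).
have := cos2Dsin2 y.
move=> e s; nra.
Qed.

Lemma omega_neq0 : omega R l != 0.
Proof.
apply/negP=> /eqP h; have := omega_l; rewrite h expr0n eqn0Ngt hl /=.
by move/eqP; rewrite eq_sym oner_eq0.
Qed.

Lemma omega_inj (i j : nat) : (i < l)%N -> (j < l)%N ->
  omega R l ^+ i = omega R l ^+ j -> i = j.
Proof.
wlog ij : i j / (i <= j)%N.
  move=> H il jl e; case: (leqP i j) => c; first exact: H.
  by symmetry; apply: H => //; apply: ltnW.
move=> il jl e; case: (ltngtP i j) => c //; first last.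
  by rewrite ltnNge ij in c.
exfalso.
have := @omega_neq1 (j - i); rewrite subn_gt0 c /=.
have -> : (j - i < l)%N by apply: leq_ltn_trans jl; apply: leq_subr.
move=> /(_ isT); apply/negP; apply/negPn/eqP.
have e2 : omega R l ^+ i * omega R l ^+ (j - i) = omega R l ^+ i * 1.
  by rewrite -exprD subnKC // mulr1.
apply: (mulfI _ e2); exact: expf_neq0 omega_neq0.
Qed.

Lemma geo (k' k : 'I_l) : \sum_(m < l) omega R l ^+ (m * k') / omega R l ^+ (m * k)
  = if k' == k then l%:R else 0.
Proof.
under eq_bigr => m _ do rewrite ![(m * _)%N]mulnC !exprM -expr_div_n.
case: eqP => [->|ne].
  rewrite divff ?expf_neq0 ?omega_neq0 //.
  under eq_bigr => m _ do rewrite expr1n.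
  by rewrite sumr_const card_ord.
set y := _ / _.
have y1 : y != 1.
  apply/negP => /eqP h; apply: ne; apply/val_inj.
  apply: (omega_inj _ _ (ltn_ord k') (ltn_ord k)); exact: divr1_eq h.
have yl : y ^+ l = 1.
  by rewrite /y expr_div_n -!exprM !(mulnC _ l) !exprM omega_l !expr1n divr1.
have := subrX1 y l; rewrite yl subrr => /esym /eqP; rewrite mulf_eq0 subr_eq0.
by rewrite (negPf y1) /= => /eqP.
Qed.

Lemma idft_dft (h : 'I_l -> C) (k : 'I_l) :
  idft R l (fun m => \sum_(k' < l) h k' * omega R l ^+ (m * k')) k = h k.
Proof.
rewrite /idft.
under eq_bigr => m _ do rewrite mulr_suml.
rewrite exchange_big /=.
under eq_bigr => k' _ do under eq_bigr => m _ do rewrite -mulrA.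
under eq_bigr => k' _ do rewrite -mulr_sumr geo.
rewrite (bigD1 k) //= eqxx big1 ?addr0.
  by rewrite mulrC mulfK // pnatr_eq0 -lt0n.
by move=> i /negPf ->; rewrite mulr0.
Qed.
Lemma omega_conj : conjc (omega R l) = (omega R l)^-1.
Proof.
have h : omega R l * conjc (omega R l) = 1.
  rewrite /omega /= mulcE; set t := 2 * pi / _.
  rewrite -[1 : C]/(Complex 1 0); congr Complex; last by ring.
  by rewrite -(cos2Dsin2 t); ring.
by rewrite -(mulKf omega_neq0 (conjc (omega R l))) h mulr1.
Qed.
End Trig.
Section Quad.
Variable R : realType.
Local Notation C := R[i].

Lemma rcE : rc R = real_complex R.
Proof. by []. Qed.

Definition Tm d (x : C) : 'M[C]_d :=
  \matrix_(i, j) if (j <= i)%N then x ^+ (i - j) else 0.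

Lemma sum_split l (F : nat -> C) N :
  \sum_(n < N * l) F n = \sum_(r < l) \sum_(c < N) F (c * l + r)%N.
Proof.
rewrite exchange_big /=.
elim: N => [|N IH]; first by rewrite mul0n !big_ord0.
rewrite big_ord_recr /= -IH.
rewrite (_ : N.+1 * l = N * l + l)%N ?mulSnr // big_split_ord /=.
congr (_ + _); apply: eq_bigr => r _; by rewrite addnC.
Qed.

Lemma inner d (i j : 'I_d) (f : nat -> C) :
  \sum_(n < d | (nat_of_ord i == j + n)%N) f n =
  if (j <= i)%N then f (i - j)%N else 0.
Proof.
case: leqP => c.
  have h : (i - j < d)%N by apply: leq_ltn_trans (ltn_ord i); apply: leq_subr.
  rewrite (bigD1 (Ordinal h)) /= ?subnKC // big1 ?addr0 //.
  move=> n /andP[/eqP e ne]; exfalso; move/eqP: ne; apply; apply: val_inj => /=.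
  lia.
by rewrite big1 // => n /eqP e; lia.
Qed.

Lemma nchunks_ge d l : (0 < l)%N -> (d <= nchunks d l * l)%N.
Proof.
move=> hl; rewrite /nchunks.
have := divn_eq (d + l).-1 l; have := ltn_pmod (d + l).-1 hl.
lia.
Qed.


Lemma quad_T d l (hl : (0 < l)%N) (u v : 'cV[R]_d) (m : 'I_l) :
  quad R d l u v m =
  ((map_mx (rc R) u)^T *m Tm d (omega R l ^+ m) *m map_mx (rc R) v) 0 0.
Proof.
rewrite /quad /dft /quad_w.
set x := omega R l ^+ m.
have xl : x ^+ l = 1 by rewrite /x -exprM mulnC exprM omega_l // expr1n.
transitivity (\sum_(n < nchunks d l * l) rc R (quad_qpad R d u v n) * x ^+ n).
  rewrite (sum_split l (fun n => rc R (quad_qpad R d u v n) * x ^+ n)); apply: eq_bigr => r _.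
  rewrite rcE rmorph_sum mulr_suml; apply: eq_bigr => c _.
  congr (_ * _).
  by rewrite [in RHS]exprD (mulnC c) [x ^+ (l * c)]exprM xl expr1n mul1r /x -exprM.
transitivity (\sum_(n < d) rc R (quad_q R d u v n) * x ^+ n).
  rewrite (big_ord_widen (nchunks d l * l) (fun n => rc R (quad_q R d u v n) * x ^+ n) (nchunks_ge d l hl)).
  rewrite (bigID (fun n : 'I__ => (n < d)%N)) /= [X in _ + X]big1 ?addr0.
    by apply: eq_bigr => n nd; rewrite /quad_qpad nd.
  by move=> n /negPf nd; rewrite /quad_qpad nd rcE rmorph0 mul0r.
rewrite /quad_q.
under eq_bigr => n _ do rewrite rcE rmorph_sum mulr_suml.
rewrite exchange_big /= mxE.
apply: eq_bigr => j _.
rewrite !mxE mulr_suml.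
under eq_bigr => n _ do rewrite rmorph_sum mulr_suml big_mkcond.
rewrite exchange_big /=; apply: eq_bigr => i _.
rewrite -big_mkcond (inner d i j (fun n => rc R (u i 0 * v j 0) * x ^+ n)) !mxE.
by case: ifP => _; rewrite ?mulr0 ?mul0r // rcE rmorphM mulrAC.
Qed.
Lemma ST d (x : C) (i j : 'I_d) :
  (map_mx (rc R) (shiftS R d) *m Tm d x) i j =
  if (0 < i)%N && (j <= i.-1)%N then x ^+ (i.-1 - j) else 0.
Proof.
rewrite mxE.
under eq_bigr => k _ do rewrite !mxE rcE rmorph_nat.
case: i => [[|i'] hi] /=.
  by rewrite big1 // => k _; rewrite mul0r.
have hi' : (i' < d)%N by apply: ltnW.
rewrite (bigD1 (Ordinal hi')) //= eqxx mul1r big1 ?addr0 //.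
move=> k /eqP ne; rewrite eqSS.
case: eqP => e; last by rewrite mul0r.
by exfalso; apply: ne; apply: val_inj.
Qed.

Lemma Tinv d (x : C) :
  (1%:M - x *: map_mx (rc R) (shiftS R d)) *m Tm d x = 1%:M.
Proof.
apply/matrixP => i j.
rewrite mulmxBl mul1mx -scalemxAl.
have HS := ST d x i j; set P := (_ *m _) in HS *.
clearbody P; rewrite !mxE HS.
have -> : (i == j) = (i == j :> nat) by [].
move: (nat_of_ord i) (nat_of_ord j) => a b.
case: a => [|a] /=.
  rewrite mulr0 subr0; case: b => [|b] //=; by rewrite expr0.
case: (ltngtP b a.+1) => h.
- have h' : (b <= a)%N by [].
  by rewrite h' subSn // exprS subrr.
- by rewrite leqNgt (ltnW h) /= mulr0 subr0.
- by rewrite h subnn expr0 ltnn mulr0 subr0.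
Qed.
End Quad.
Lemma SM (F : fieldType) n (M T N : 'M[F]_n) (a e v : 'cV[F]_n) (u : 'rV[F]_n) (x : F) :
  M *m T = 1%:M -> N = M - x *: (a *m e^T) -> N \in unitmx ->
  1 - x * (e^T *m T *m a) 0 0 != 0 /\
  (u *m invmx N *m v) 0 0 = (u *m T *m v) 0 0 +
     x * (u *m T *m a) 0 0 * (e^T *m T *m v) 0 0 / (1 - x * (e^T *m T *m a) 0 0).
Proof.
move=> MT hN Nu.
set s := (e^T *m T *m a) 0 0.
have TM : T *m M = 1%:M := mulmx1C MT.
have sc : forall w : 'cV_n, a *m (e^T *m w) = (e^T *m w) 0 0 *: a.
  by move=> w; rewrite {1}[e^T *m w]mx11_scalar mul_mx_scalar.
have key : forall w : 'cV_n, T *m (N *m w) = w - (x * (e^T *m w) 0 0) *: (T *m a).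
  move=> w; rewrite hN mulmxBl mulmxBr mulmxA TM mul1mx; congr (_ - _).
  by rewrite -scalemxAl -mulmxA sc -!scalemxAr scalerA.
have Ta : N *m (T *m a) = (1 - x * s) *: a.
  rewrite hN mulmxBl mulmxA MT mul1mx -scalemxAl -mulmxA sc scalerA mulmxA -/s.
  by rewrite scalerBl scale1r.
have nz : 1 - x * s != 0.
  apply/negP => /eqP h0.
  have Ta0 : T *m a = 0 by rewrite -(mulKmx Nu (T *m a)) Ta h0 scale0r mulmx0.
  have a0 : a = 0 by rewrite -(mul1mx a) -MT -mulmxA Ta0 mulmx0.
  by move: h0; rewrite /s a0 mulmx0 mxE mulr0 subr0 => /eqP; rewrite oner_eq0.
split => //.
set y := invmx N *m v.
have Ny : N *m y = v by rewrite /y mulKVmx.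
set t := (e^T *m y) 0 0.
have Y : y = T *m v + (x * t) *: (T *m a).
  by rewrite -Ny key subrK.
have tE : t = (e^T *m T *m v) 0 0 + x * t * s.
  rewrite {1}/t {1}Y mulmxDr -scalemxAr mxE [in X in _ + X]mxE mulmxA.
  by rewrite /s mulmxA.
have tE2 : t = (e^T *m T *m v) 0 0 / (1 - x * s).
  apply: (canRL (mulfK nz)); rewrite mulrBr mulr1 {1}tE; ring.
rewrite -mulmxA -/y {1}Y mulmxDr -scalemxAr mxE [in X in _ + X]mxE !mulmxA tE2.
rewrite -/s; field; exact: nz.
Qed.

Lemma algF (F : fieldType) (x P Q V s : F) : x != 0 -> 1 - x * s != 0 ->
  P + Q * V / (x^-1 - s) = P + x * Q * V / (1 - x * s).
Proof.
move=> x0 nz.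
have -> : x^-1 - s = (1 - x * s) / x by field.
by field; rewrite nz x0.
Qed.

Lemma exprZm (F : comPzRingType) n (c : F) (M : 'M[F]_n) k :
  (c *: M) ^+ k = c ^+ k *: M ^+ k.
Proof.
elim: k => [|k IH]; first by rewrite !expr0 scale1r.
by rewrite !exprSr IH -!mulmxE -scalemxAl -scalemxAr scalerA.
Qed.

Lemma telesc (T : pzRingType) (y : T) k : (\sum_(i < k) y ^+ i) * (1 - y) = 1 - y ^+ k.
Proof.
elim: k => [|k IH]; first by rewrite big_ord0 mul0r expr0 subrr.
by rewrite big_ord_recr /= mulrDl IH mulrBr mulr1 -exprSr addrA subrK.
Qed.

Lemma idft_ext (R : realType) l (f g : 'I_l -> R[i]) : f =1 g -> idft R l f =1 idft R l g.
Proof. by move=> H k; rewrite /idft; under eq_bigr => m _ do rewrite H. Qed.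

Theorem theorem1 (R : realType) (d l : nat) (hd : (1 <= d)%N) (hl : (1 <= l)%N)
  (a B : 'cV[R]_d) (Cm : 'rV[R]_d) :
  (forall m : 'I_l,
     (1%:M - omega R l ^+ m *: map_mx (@rc R) (companion R d a)) \in unitmx) ->
  forall k : 'I_l,
    algorithm1 R d l a B Cm k = rc R ((Cm *m companion R d a ^+ k *m B) 0 0).
Proof.
move=> Hinv k.
rewrite -(@idft_dft R l hl (fun k' => rc R ((Cm *m companion R d a ^+ k' *m B) 0 0)) k).
rewrite /algorithm1.
apply: idft_ext => m; rewrite [conjc _ ^+ _](_ : _ = (omega R l ^+ m)^-1); last by rewrite omega_conj ?exprVn.
rewrite !quad_T //.
set x := omega R l ^+ m.
have xl : x ^+ l = 1 by rewrite /x -exprM mulnC exprM omega_l // expr1n.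
have x0 : x != 0 by rewrite expf_neq0 // omega_neq0.
have := Hinv m; rewrite -/x => Nu.
set A := companion R d a.
set Ac := map_mx (rc R) A.
set Sc := map_mx (rc R) (shiftS R d).
set ac := map_mx (rc R) a.
set ec := map_mx (rc R) (e_last R d).
set Bc := map_mx (rc R) B.
set Cc := map_mx (rc R) Cm.
have hAc : Ac = Sc + ac *m ec^T.
  by rewrite /Ac /A /companion /Sc /ac /ec rcE map_mxD map_mxM map_trmx.
have hCt : (map_mx (rc R) ((Cm *m (1%:M - A ^+ l))^T))^T = Cc *m (1%:M - Ac ^+ l).
  by rewrite map_trmx trmxK /Cc /Ac rcE map_mxM map_mxB map_mx1 rmorphXn.
rewrite hCt.
have MT := Tinv R d x.
have hN : 1%:M - x *: Ac = (1%:M - x *: Sc) - x *: (ac *m ec^T).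
  by rewrite hAc scalerDr opprD addrA.
have [nz SMe] := @SM _ _ _ _ _ ac ec Bc (Cc *m (1%:M - Ac ^+ l)) x MT hN Nu.
transitivity ((Cc *m (1%:M - Ac ^+ l) *m invmx (1%:M - x *: Ac) *m Bc) 0 0).
  by rewrite SMe algF.

set G := \sum_(i < l) (x *: Ac) ^+ i.
have GN : G *m (1%:M - x *: Ac) = 1%:M - Ac ^+ l.
  by rewrite mulmxE /G (@telesc _ (x *: Ac) l) exprZm xl scale1r.
have G' : (1%:M - Ac ^+ l) *m invmx (1%:M - x *: Ac) = G by rewrite -GN mulmxK.
rewrite -(mulmxA Cc) G' mulmx_sumr mulmx_suml summxE.
apply: eq_bigr => i _.
rewrite exprZm -scalemxAr -scalemxAl mxE mulrC /x -exprM.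
congr (_ * _).
by rewrite /Cc /Ac /Bc rcE -rmorphXn -!map_mxM mxE.
Qed.
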